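(* Let $\mathbb{T}$ be a finitary algebraic theory such that the associated variety of algebras $\mathbb{V}(\mathbb{T})$ is pointed protomodular. If $\mathbb{V}(\mathbb{T})$ satisfies (Huq=Smith), then for every finitely complete category $\mathbb{E}$, the category $\mathbb{T}(\mathbb{E})$ of internal $\mathbb{T}$-algebras in $\mathbb{E}$ satisfies (Huq=Smith).
   Context: For a finitely complete category $\mathbb{E}$, $\mathbb{T}(\mathbb{E})$ is the category of internal $\mathbb{T}$-algebras: objects $X$ of $\mathbb{E}$ with morphisms $X^n\to X$ for each $n$-ary operation of $\mathbb{T}$ satisfying the equations of $\mathbb{T}$, and morphisms commuting with the operations. A finitely complete category is pointed if it has a zero object. A pointed category is protomodular if for every split epimorphism $f\colon X\to Y$ with section $s$ ($fs=1_Y$), the kernel $k_f\colon \mathrm{Ker} f\to X$ and $s$ are jointly strongly epic (the only subobject of $X$ through which both factor is $X$ itself); pointed protomodular categories are Mal'tsev (every reflexive relation is an equivalence relation). In a pointed category, for an equivalence relation $R$ on $X$ with projections $d_0,d_1$, $I_R\rightarrowtail X$ is $d_1\circ\bar x$, where $\bar x\colon I_R\to R$ is the pullback of $d_0$ along $0\to X$. Subobjects $u\colon U\rightarrowtail X$, $v\colon V\rightarrowtail X$ cooperate, $[u,v]=0$, if there is $\varphi\colon U\times V\to X$ with $\varphi\langle 1_U,0\rangle=u$, $\varphi\langle 0,1_V\rangle=v$. For equivalence relations $R,S$ on $X$, $R\times_X S$ is the pullback of $d_1^R$ and $d_0^S$ (triples $xRySz$), with $l_R(xRy)=xRySy$,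 $r_S(ySz)=yRySz$; $[R,S]=0$ means there is $p\colon R\times_XS\to X$ with $pr_S=d_1^S$, $pl_R=d_0^R$. A pointed Mal'tsev category satisfies (Huq=Smith) if for every $X$ and all equivalence relations $R,S$ on $X$, $[I_R,I_S]=0$ implies $[R,S]=0$. *)

(* Defs.v *)
From Stdlib Require Import Fin FunctionalExtensionality ProofIrrelevance.

Set Implicit Arguments.
Unset Strict Implicit.

(* Equality of morphisms is Leibniz equality.                            *)
Record Cat := {
  Ob :> Type;
  Hom : Ob -> Ob -> Type;
  cmp : forall A B D, Hom B D -> Hom A B -> Hom A D;
  idm : forall A, Hom A A }.
Arguments Hom {c} _ _.
Arguments cmp {c A B D} _ _.
Arguments idm {c} A.
Notation "g ∘ f" := (cmp g f) (at level 40, left associativity).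

Definition IsCat (C : Cat) : Prop :=
  (forall (A B D E : C) (h : Hom D E) (g : Hom B D) (f : Hom A B),
      h ∘ (g ∘ f) = (h ∘ g) ∘ f) /\
  (forall (A B : C) (f : Hom A B), idm B ∘ f = f) /\
  (forall (A B : C) (f : Hom A B), f ∘ idm A = f).

Section Notions.
Variable C : Cat.

Definition is_pullback {X Y Z P : C} (f : Hom X Z) (g : Hom Y Z)
    (p1 : Hom P X) (p2 : Hom P Y) : Prop :=
  f ∘ p1 = g ∘ p2 /\
  forall (Q : C) (h : Hom Q X) (k : Hom Q Y), f ∘ h = g ∘ k ->
    exists u : Hom Q P, p1 ∘ u = h /\ p2 ∘ u = k /\
      forall u' : Hom Q P, p1 ∘ u' = h -> p2 ∘ u' = k -> u' = u.

Definition is_product {A B P : C} (p1 : Hom P A) (p2 : Hom P B) : Prop :=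
  forall (Q : C) (h : Hom Q A) (k : Hom Q B),
    exists u : Hom Q P, p1 ∘ u = h /\ p2 ∘ u = k /\
      forall u' : Hom Q P, p1 ∘ u' = h -> p2 ∘ u' = k -> u' = u.

Definition is_zero_obj (Z : C) : Prop :=
  forall X : C,
    (exists f : Hom Z X, forall g : Hom Z X, g = f) /\
    (exists f : Hom X Z, forall g : Hom X Z, g = f).

Definition Pointed : Prop := exists Z : C, is_zero_obj Z.

Definition is_zero_mor {A B : C} (f : Hom A B) : Prop :=
  exists (Z : C) (a : Hom A Z) (b : Hom Z B), is_zero_obj Z /\ f = b ∘ a.

Definition is_mono {A B : C} (m : Hom A B) : Prop :=
  forall (Q : C) (a b : Hom Q A), m ∘ a = m ∘ b -> a = b.

Definition is_iso {A B : C} (m : Hom A B) : Prop :=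
  exists n : Hom B A, n ∘ m = idm A /\ m ∘ n = idm B.

Definition is_kernel {X Y K : C} (f : Hom X Y) (k : Hom K X) : Prop :=
  exists (Z : C) (z : Hom Z Y) (t : Hom K Z), is_zero_obj Z /\ is_pullback f z k t.

(* Pointed protomodularity: for every split epi f with section s, the kernel
   of f and s are jointly strongly epic: a subobject (mono) of X through which
   both factor is an isomorphism. *)
Definition Protomodular : Prop :=
  forall (X Y : C) (f : Hom X Y) (s : Hom Y X), f ∘ s = idm Y ->
  forall (K : C) (k : Hom K X), is_kernel f k ->
  forall (M : C) (m : Hom M X), is_mono m ->
    (exists a : Hom K M, m ∘ a = k) -> (exists b : Hom Y M, m ∘ b = s) ->
    is_iso m.

Definition is_eqrel {X R : C} (d0 d1 : Hom R X) : Prop :=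
  (forall (Q : C) (a b : Hom Q R), d0 ∘ a = d0 ∘ b -> d1 ∘ a = d1 ∘ b -> a = b) /\
  (exists r : Hom X R, d0 ∘ r = idm X /\ d1 ∘ r = idm X) /\
  (exists s : Hom R R, d0 ∘ s = d1 /\ d1 ∘ s = d0) /\
  (forall (P : C) (p1 p2 : Hom P R), is_pullback d1 d0 p1 p2 ->
     exists t : Hom P R, d0 ∘ t = d0 ∘ p1 /\ d1 ∘ t = d1 ∘ p2).

Definition cooperate {U V X : C} (u : Hom U X) (v : Hom V X) : Prop :=
  exists (P : C) (p1 : Hom P U) (p2 : Hom P V) (m1 : Hom U P) (m2 : Hom V P)
         (phi : Hom P X),
    is_product p1 p2 /\
    p1 ∘ m1 = idm U /\ is_zero_mor (p2 ∘ m1) /\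
    is_zero_mor (p1 ∘ m2) /\ p2 ∘ m2 = idm V /\
    phi ∘ m1 = u /\ phi ∘ m2 = v.

Definition centralize {X R S : C} (d0R d1R : Hom R X) (d0S d1S : Hom S X) : Prop :=
  exists (P : C) (q1 : Hom P R) (q2 : Hom P S) (eR : Hom X R) (eS : Hom X S)
         (lR : Hom R P) (rS : Hom S P) (p : Hom P X),
    is_pullback d1R d0S q1 q2 /\
    d0R ∘ eR = idm X /\ d1R ∘ eR = idm X /\
    d0S ∘ eS = idm X /\ d1S ∘ eS = idm X /\
    q1 ∘ lR = idm R /\ q2 ∘ lR = eS ∘ d1R /\
    q1 ∘ rS = eR ∘ d0S /\ q2 ∘ rS = idm S /\
    p ∘ rS = d1S /\ p ∘ lR = d0R.

Definition HuqSmith : Prop :=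
  forall (X R S : C) (d0R d1R : Hom R X) (d0S d1S : Hom S X),
    is_eqrel d0R d1R -> is_eqrel d0S d1S ->
  forall (Z : C) (zX : Hom Z X), is_zero_obj Z ->
  forall (IR : C) (xR : Hom IR R) (tR : Hom IR Z), is_pullback d0R zX xR tR ->
  forall (IS : C) (xS : Hom IS S) (tS : Hom IS Z), is_pullback d0S zX xS tS ->
    cooperate (d1R ∘ xR) (d1S ∘ xS) -> centralize d0R d1R d0S d1S.

End Notions.

Record FinLim (C : Cat) := {
  term : Ob C;
  bang : forall X : C, Hom X term;
  bang_uniq : forall (X : C) (f : Hom X term), f = bang X;
  prd : C -> C -> C;
  pr1 : forall A B : C, Hom (prd A B) A;
  pr2 : forall A B : C, Hom (prd A B) B;
  pair : forall (Z A B : C), Hom Z A -> Hom Z B -> Hom Z (prd A B);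
  pr1_pair : forall (Z A B : C) (f : Hom Z A) (g : Hom Z B), pr1 A B ∘ pair f g = f;
  pr2_pair : forall (Z A B : C) (f : Hom Z A) (g : Hom Z B), pr2 A B ∘ pair f g = g;
  pair_uniq : forall (Z A B : C) (h : Hom Z (prd A B)),
      h = pair (pr1 A B ∘ h) (pr2 A B ∘ h);
  has_pb : forall (X Y Z : C) (f : Hom X Z) (g : Hom Y Z),
      exists (P : C) (p1 : Hom P X) (p2 : Hom P Y), is_pullback f g p1 p2 }.
Arguments term {C} _.
Arguments bang {C} _ _.
Arguments prd {C} _ _ _.
Arguments pr1 {C} _ _ _.
Arguments pr2 {C} _ _ _.
Arguments pair {C} _ {Z A B} _ _.
Arguments pair_uniq {C} _ {Z A B} _.
Arguments pr1_pair {C} _ {Z A B} _ _.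
Arguments pr2_pair {C} _ {Z A B} _ _.
Arguments bang_uniq {C} _ {X} _.

Record Signature := { Op : Type; arity : Op -> nat }.

Inductive Term (Sg : Signature) (n : nat) : Type :=
| Var : Fin.t n -> Term Sg n
| App : forall o : Op Sg, (Fin.t (arity o) -> Term Sg n) -> Term Sg n.

Record Theory := {
  sig :> Signature;
  eqns : forall n : nat, Term sig n -> Term sig n -> Prop }.

Section Internal.
Variables (C : Cat) (HC : IsCat C) (L : FinLim C).

Fixpoint pow (X : C) (n : nat) : C :=
  match n with 0 => term L | S m => prd L X (pow X m) end.

Fixpoint proj (X : C) {n : nat} (i : Fin.t n) : Hom (pow X n) X :=
  match i in Fin.t n return Hom (pow X n) X with
  | Fin.F1 => pr1 L X _
  | @Fin.FS m j => proj X j ∘ pr2 L X (pow X m)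
  end.

Fixpoint tuple (X Y : C) (n : nat) : (Fin.t n -> Hom Y X) -> Hom Y (pow X n) :=
  match n return (Fin.t n -> Hom Y X) -> Hom Y (pow X n) with
  | 0 => fun _ => bang L Y
  | S m => fun fs => pair L (fs Fin.F1) (tuple (fun i => fs (Fin.FS i)))
  end.

Definition powmap {X Y : C} (f : Hom X Y) (n : nat) : Hom (pow X n) (pow Y n) :=
  tuple (fun i => f ∘ proj X i).

Variable T : Theory.

Record IAlg := { car : C; act : forall o : Op T, Hom (pow car (arity o)) car }.

Fixpoint interp (A : IAlg) {n : nat} (t : Term T n) : Hom (pow (car A) n) (car A) :=
  match t with
  | @Var _ _ i => proj (car A) i
  | @App _ _ o ts => act A o ∘ tuple (fun i => interp A (ts i))
  end.

Definition satisfies (A : IAlg) : Prop :=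
  forall n (t1 t2 : Term T n), @eqns T n t1 t2 -> interp A t1 = interp A t2.

Definition is_alg_hom (A B : IAlg) (f : Hom (car A) (car B)) : Prop :=
  forall o : Op T, f ∘ act A o = act B o ∘ powmap f (arity o).

Lemma tuple_ext {X Y : C} n (fs gs : Fin.t n -> Hom Y X) :
  (forall i, fs i = gs i) -> tuple fs = tuple gs.
Proof.
  induction n as [|n IH]; simpl; intros H; [reflexivity|].
  rewrite H; f_equal; apply IH; intros i; apply H.
Qed.

Lemma pair_comp {Z Z' A B : C} (f : Hom Z A) (g : Hom Z B) (h : Hom Z' Z) :
  pair L f g ∘ h = pair L (f ∘ h) (g ∘ h).
Proof.
  destruct HC as [assoc _].
  rewrite (pair_uniq L (pair L f g ∘ h)), !assoc, (pr1_pair L), (pr2_pair L). reflexivity.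
Qed.

Lemma proj_tuple {X Y : C} n (i : Fin.t n) (fs : Fin.t n -> Hom Y X) :
  proj X i ∘ tuple fs = fs i.
Proof.
  destruct HC as [assoc _].
  induction i as [n|n i IH]; simpl.
  - apply (pr1_pair L).
  - rewrite <- assoc, (pr2_pair L). apply (IH (fun j => fs (Fin.FS j))).
Qed.

Lemma tuple_eta {X Y : C} n (h : Hom Y (pow X n)) :
  h = tuple (fun i => proj X i ∘ h).
Proof.
  destruct HC as [assoc _].
  induction n as [|n IH]; simpl.
  - apply (bang_uniq L).
  - rewrite (pair_uniq L h) at 1. f_equal.
    rewrite (IH (pr2 L X (pow X n) ∘ h)) at 1.
    apply tuple_ext; intros i; apply assoc.
Qed.

Lemma proj_ext {X Y : C} n (g h : Hom Y (pow X n)) :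
  (forall i, proj X i ∘ g = proj X i ∘ h) -> g = h.
Proof.
  intros H. rewrite (tuple_eta g), (tuple_eta h). apply tuple_ext, H.
Qed.

Lemma powmap_comp {X Y W : C} (f : Hom X Y) (g : Hom Y W) n :
  powmap (g ∘ f) n = powmap g n ∘ powmap f n.
Proof.
  destruct HC as [assoc _].
  apply proj_ext; intros i. unfold powmap.
  rewrite proj_tuple, assoc, proj_tuple, <- !assoc, proj_tuple. reflexivity.
Qed.

Lemma powmap_id (X : C) n : powmap (idm X) n = idm (pow X n).
Proof.
  destruct HC as [_ [idl idr]].
  apply proj_ext; intros i. unfold powmap. rewrite proj_tuple, idl, idr. reflexivity.
Qed.

Lemma alg_hom_comp (A B D : IAlg) (f : Hom (car A) (car B)) (g : Hom (car B) (car D)) :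
  is_alg_hom f -> is_alg_hom g -> is_alg_hom (g ∘ f).
Proof.
  destruct HC as [assoc _]. intros Hf Hg o.
  rewrite <- assoc, Hf, assoc, Hg, <- assoc, <- powmap_comp. reflexivity.
Qed.

Lemma alg_hom_id (A : IAlg) : is_alg_hom (idm (car A)).
Proof.
  destruct HC as [_ [idl idr]]. intros o. rewrite powmap_id, idl, idr. reflexivity.
Qed.

Definition TAlg : Cat := {|
  Ob := { A : IAlg | satisfies A };
  Hom := fun A B => { f : Hom (car (proj1_sig A)) (car (proj1_sig B)) | is_alg_hom f };
  cmp := fun A B D g f =>
    exist _ (proj1_sig g ∘ proj1_sig f) (alg_hom_comp (proj2_sig f) (proj2_sig g));
  idm := fun A => exist _ (idm _) (alg_hom_id (proj1_sig A)) |}.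

End Internal.

Definition SetCat : Cat := {|
  Ob := Type;
  Hom := fun A B => A -> B;
  cmp := fun A B D g f x => g (f x);
  idm := fun A x => x |}.

Lemma SetCat_isCat : IsCat SetCat.
Proof. repeat split. Qed.

Lemma SetCat_pb (X Y Z : SetCat) (f : Hom X Z) (g : Hom Y Z) :
  exists (P : SetCat) (p1 : Hom P X) (p2 : Hom P Y), is_pullback f g p1 p2.
Proof.
  exists {p : (X : Type) * (Y : Type) | f (fst p) = g (snd p)}.
  exists (fun p => fst (proj1_sig p)), (fun p => snd (proj1_sig p)).
  split.
  - apply functional_extensionality; intros [p e]; exact e.
  - intros Q h k E.
    exists (fun q => exist _ (h q, k q) (f_equal (fun F => F q) E)).
    repeat split.
    intros u' E1 E2. apply functional_extensionality; intros q.
    destruct (u' q) as [[a b] e] eqn:Hu.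
    assert (a = h q) by (rewrite <- E1; simpl; rewrite Hu; reflexivity).
    assert (b = k q) by (rewrite <- E2; simpl; rewrite Hu; reflexivity).
    subst. f_equal. apply proof_irrelevance.
Qed.

Definition SetFinLim : FinLim SetCat.
Proof.
  refine {| term := (unit : SetCat);
            bang := fun X (_ : X) => tt;
            prd := fun A B => ((A : Type) * (B : Type))%type;
            pr1 := fun A B (p : (A : Type) * (B : Type)) => fst p;
            pr2 := fun A B (p : (A : Type) * (B : Type)) => snd p;
            pair := fun Z A B (f : Z -> A) (g : Z -> B) (z : Z) => (f z, g z);
            has_pb := SetCat_pb |}.
  - intros X f; apply functional_extensionality; intros x; destruct (f x); reflexivity.
  - reflexivity.
  - reflexivity.
  - intros Z A B h; apply functional_extensionality; intros z; simpl;
      destruct (h z); reflexivity.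
Defined.

Definition Variety (T : Theory) : Cat := TAlg SetCat_isCat SetFinLim T.

(* Main.v *)
Require Import Defs.
From Stdlib Require Import FunctionalExtensionality ProofIrrelevance ClassicalEpsilon.
Set Implicit Arguments.
Unset Strict Implicit.

Lemma sig_eq {A : Type} {Pr : A -> Prop} (x y : Specif.sig Pr) : proj1_sig x = proj1_sig y -> x = y.
Proof. destruct x, y; simpl; intros ->; f_equal; apply proof_irrelevance. Qed.

Section G.
Variables (E : Cat) (HE : IsCat E) (L : FinLim E) (T : Theory).

Definition mkA (P : E) (u : forall o, Hom (pow L P (arity o)) P) : IAlg L T :=
  @Build_IAlg E L T P u.
Arguments mkA : clear implicits.

Lemma assocE (A B D F : E) (h : Hom D F) (g : Hom B D) (f : Hom A B) :
  h ∘ (g ∘ f) = (h ∘ g) ∘ f.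
Proof. apply (proj1 HE). Qed.
Lemma idlE (A B : E) (f : Hom A B) : idm B ∘ f = f.
Proof. apply (proj1 (proj2 HE)). Qed.
Lemma idrE (A B : E) (f : Hom A B) : f ∘ idm A = f.
Proof. apply (proj2 (proj2 HE)). Qed.

Lemma tuple_comp {X Y Y' : E} n (fs : Fin.t n -> Hom Y X) (h : Hom Y' Y) :
  tuple L fs ∘ h = tuple L (fun i => fs i ∘ h).
Proof.
  apply (proj_ext HE); intros i. rewrite assocE, !(proj_tuple HE). reflexivity.
Qed.

Lemma proj_powmap {X Y : E} (f : Hom X Y) n (i : Fin.t n) :
  proj L Y i ∘ powmap L f n = f ∘ proj L X i.
Proof. unfold powmap. apply (proj_tuple HE). Qed.

Lemma powmap_tuple {X Y Z : E} (f : Hom X Y) n (fs : Fin.t n -> Hom Z X) :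
  powmap L f n ∘ tuple L fs = tuple L (fun i => f ∘ fs i).
Proof.
  apply (proj_ext HE); intros i. rewrite assocE, proj_powmap, <- assocE, !(proj_tuple HE).
  reflexivity.
Qed.

Lemma tuple_proj (X : E) n : tuple L (fun i : Fin.t n => proj L X i) = idm (pow L X n).
Proof.
  apply (proj_ext HE); intros i. rewrite (proj_tuple HE), idrE. reflexivity.
Qed.

Lemma hom_interp (A B : IAlg L T) (f : Hom (car A) (car B)) (Hf : is_alg_hom f)
  n (t : Term T n) : f ∘ interp A t = interp B t ∘ powmap L f n.
Proof.
  induction t as [i|o ts IH]; simpl.
  - rewrite proj_powmap. reflexivity.
  - rewrite assocE, Hf, <- assocE, powmap_tuple, <- assocE, tuple_comp.
    f_equal. apply tuple_ext. intros i. apply IH.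
Qed.

Lemma lift_alg (P : E) (J : Type) (A : J -> IAlg L T) (HA : forall j, satisfies (A j))
  (p : forall j, Hom P (car (A j)))
  (mono : forall (Q : E) (a b : Hom Q P), (forall j, p j ∘ a = p j ∘ b) -> a = b)
  (u : forall o, Hom (pow L P (arity o)) P)
  (Hu : forall o j, p j ∘ u o = act (A j) o ∘ powmap L (p j) (arity o)) :
  satisfies (mkA P u) /\
  (forall j, is_alg_hom (A:=mkA P u) (B:=A j) (p j)) /\
  (forall (B : IAlg L T) (h : Hom (car B) P),
     (forall j, is_alg_hom (A:=B) (B:=A j) (p j ∘ h)) -> is_alg_hom (A:=B) (B:=mkA P u) h).
Proof.
  assert (H2 : forall j, is_alg_hom (A:=mkA P u) (B:=A j) (p j)).
  { intros j o. simpl. apply Hu. }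
  split; [|split; [exact H2|]].
  - intros n t1 t2 Ht. apply mono; intros j.
    rewrite !(hom_interp (H2 j)). rewrite (HA j _ _ _ Ht). reflexivity.
  - intros B h Hh o. simpl. apply mono; intros j.
    rewrite assocE, (Hh j o), assocE, Hu, <- assocE, <- (powmap_comp HE). reflexivity.
Qed.

Local Notation TA := (TAlg HE L T).

Lemma talg_hom_eq (A B : TA) (f g : Hom A B) : proj1_sig f = proj1_sig g -> f = g.
Proof.
  destruct f as [f Hf], g as [g Hg]; simpl; intros ->. f_equal. apply proof_irrelevance.
Qed.

Lemma TA_isCat : IsCat TA.
Proof.
  split; [|split]; intros; apply talg_hom_eq; simpl.
  - apply assocE.
  - apply idlE.
  - apply idrE.
Qed.

Lemma pb_jmono {X Y Z P : E} (f : Hom X Z) (g : Hom Y Z) p1 p2 :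
  is_pullback f g p1 p2 -> forall (Q : E) (a b : Hom Q P), p1 ∘ a = p1 ∘ b -> p2 ∘ a = p2 ∘ b -> a = b.
Proof.
  intros [Hc Hu] Q a b H1 H2.
  destruct (Hu Q (p1 ∘ a) (p2 ∘ a)) as [w [_ [_ Hw]]].
  { rewrite !assocE, Hc. reflexivity. }
  rewrite (Hw a eq_refl eq_refl). symmetry. apply Hw; symmetry; assumption.
Qed.

Lemma lift_pb (A B D : TA) (f : Hom A D) (g : Hom B D) (P : E)
  (p1 : Hom P (car (proj1_sig A))) (p2 : Hom P (car (proj1_sig B))) :
  is_pullback (proj1_sig f) (proj1_sig g) p1 p2 ->
  exists (u : forall o, Hom (pow L P (arity o)) P) (H : satisfies (mkA P u))
    (H1 : is_alg_hom (A:=mkA P u) (B:=proj1_sig A) p1)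
    (H2 : is_alg_hom (A:=mkA P u) (B:=proj1_sig B) p2),
    is_pullback (C:=TA) f g
      (exist _ p1 H1 : Hom (exist _ (mkA P u) H : TA) A)
      (exist _ p2 H2 : Hom (exist _ (mkA P u) H : TA) B).
Proof.
  intros Hpb.
  destruct A as [A HA], B as [B HB], D as [D HD], f as [f Hf], g as [g Hg]; simpl in *.
  assert (Hu : forall o, exists u : Hom (pow L P (arity o)) P,
     p1 ∘ u = act A o ∘ powmap L p1 _ /\ p2 ∘ u = act B o ∘ powmap L p2 _).
  { intros o. destruct Hpb as [Hc Hun].
    destruct (Hun _ (act A o ∘ powmap L p1 _) (act B o ∘ powmap L p2 _)) as [u [U1 [U2 _]]].
    - rewrite !assocE, Hf, Hg, <- !assocE, <- !(powmap_comp HE), Hc. reflexivity.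
    - exists u. split; assumption. }
  set (u := fun o => proj1_sig (constructive_indefinite_description _ (Hu o))).
  assert (Hu1 : forall o, p1 ∘ u o = act A o ∘ powmap L p1 _).
  { intros o. unfold u. destruct (constructive_indefinite_description _ _) as [w [W1 W2]]. exact W1. }
  assert (Hu2 : forall o, p2 ∘ u o = act B o ∘ powmap L p2 _).
  { intros o. unfold u. destruct (constructive_indefinite_description _ _) as [w [W1 W2]]. exact W2. }
  pose (AJ := fun j : bool => if j then A else B).
  pose (pj := fun j : bool => match j return Hom P (car (AJ j)) with true => p1 | false => p2 end).
  destruct (@lift_alg P bool AJ (fun j => match j with true => HA | false => HB end) pj)
    with (u := u) as [Hs [Hp Hl]].
  { intros Q a b H. apply (pb_jmono Hpb); [apply (H true)|apply (H false)]. }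
  { intros o [|]; simpl; auto. }
  exists u, Hs, (Hp true), (Hp false).
  split.
  - apply sig_eq. simpl. apply (proj1 Hpb).
  - intros [Q HQ] [h Hh] [k Hk] Hfg. simpl in *.
    apply (f_equal (@proj1_sig _ _)) in Hfg; simpl in Hfg.
    destruct (proj2 Hpb _ h k Hfg) as [w [W1 [W2 Wu]]].
    assert (Hw : is_alg_hom (A:=Q) (B:=mkA P u) w).
    { apply Hl. intros [|]; simpl; [rewrite W1|rewrite W2]; assumption. }
    exists (exist _ w Hw). split; [|split].
    + apply sig_eq; simpl; exact W1.
    + apply sig_eq; simpl; exact W2.
    + intros [w' Hw'] E1 E2. apply sig_eq; simpl.
      apply (f_equal (@proj1_sig _ _)) in E1. apply (f_equal (@proj1_sig _ _)) in E2.
      apply Wu; assumption.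
Qed.

End G.
Arguments mkA {E L T} P u.

Section Gen.
Variables (C : Cat) (HC : IsCat C).
Let assoc := proj1 HC.
Let idl := proj1 (proj2 HC).
Let idr := proj2 (proj2 HC).

Lemma pb_compare {X Y Z P P' : C} (f : Hom X Z) (g : Hom Y Z) p1 p2 (p1' : Hom P' X) (p2' : Hom P' Y) :
  is_pullback f g p1 p2 -> is_pullback f g p1' p2' ->
  exists (phi : Hom P' P) (psi : Hom P P'),
    p1 ∘ phi = p1' /\ p2 ∘ phi = p2' /\ p1' ∘ psi = p1 /\ p2' ∘ psi = p2 /\ phi ∘ psi = idm P.
Proof.
  intros H H'.
  destruct (proj2 H P' p1' p2' (proj1 H')) as [phi [F1 [F2 _]]].
  destruct (proj2 H' P p1 p2 (proj1 H)) as [psi [S1 [S2 _]]].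
  exists phi, psi. repeat split; try assumption.
  destruct (proj2 H P p1 p2 (proj1 H)) as [w [_ [_ Wu]]].
  rewrite (Wu (idm P)), (Wu (phi ∘ psi)); try reflexivity;
    rewrite ?assoc, ?F1, ?F2, ?S1, ?S2, ?idr; reflexivity.
Qed.

Lemma prod_pb {A B T0 P : C} (HT : forall (X : C) (f g : Hom X T0), f = g)
  (a : Hom A T0) (b : Hom B T0) (p1 : Hom P A) (p2 : Hom P B) :
  is_product p1 p2 <-> is_pullback a b p1 p2.
Proof.
  split.
  - intros H. split; [apply HT|]. intros Q h k _. apply H.
  - intros H Q h k. apply (proj2 H). apply HT.
Qed.

End Gen.

Section G2.
Variables (E : Cat) (HE : IsCat E) (L : FinLim E) (T : Theory).
Local Notation TA := (TAlg HE L T).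

Lemma TPB_E (A B D Pt : TA) (f : Hom A D) (g : Hom B D) (p1 : Hom Pt A) (p2 : Hom Pt B) :
  is_pullback f g p1 p2 ->
  is_pullback (proj1_sig f) (proj1_sig g) (proj1_sig p1) (proj1_sig p2).
Proof.
  intros Hpb.
  destruct (has_pb L (proj1_sig f) (proj1_sig g)) as [P [q1 [q2 Hq]]].
  destruct (lift_pb (HE:=HE) Hq) as [u [H [H1 [H2 Hpb']]]].
  destruct (pb_compare (TA_isCat HE L T) Hpb Hpb') as [phi [psi [F1 [F2 [S1 [S2 FS]]]]]].
  apply (f_equal (@proj1_sig _ _)) in F1, F2, S1, S2, FS.
  destruct phi as [phi Hphi], psi as [psi Hpsi].
  simpl in F1, F2, S1, S2, FS.
  split.
  - exact (f_equal (@proj1_sig _ _) (proj1 Hpb)).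
  - intros Q h k Hhk.
    destruct (proj2 Hq Q h k Hhk) as [w [W1 [W2 Wu]]].
    exists (phi ∘ w). split; [|split].
    + rewrite <- W1, <- F1. apply (assocE HE).
    + rewrite <- W2, <- F2. apply (assocE HE).
    + intros u' U1 U2.
      transitivity (phi ∘ (psi ∘ u')).
      { rewrite (assocE HE). transitivity (idm (car (proj1_sig Pt)) ∘ u');
        [symmetry; apply (idlE HE) | f_equal; symmetry; exact FS]. }
      f_equal.
      apply Wu; [rewrite <- S1 in U1|rewrite <- S2 in U2]; rewrite (assocE HE); assumption.
Qed.

End G2.
Notation V T := (Variety T).

Lemma VisCat (T : Theory) : IsCat (V T).
Proof. exact (TA_isCat SetCat_isCat SetFinLim T). Qed.

Lemma vhom_eq (T : Theory) (A B : V T) (f g : Hom A B) :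
  (forall x, proj1_sig f x = proj1_sig g x) -> f = g.
Proof. intros H. apply sig_eq. apply functional_extensionality. exact H. Qed.

Lemma vapp (T : Theory) (A B : V T) (f g : Hom A B) :
  f = g -> forall x, proj1_sig f x = proj1_sig g x.
Proof. intros ->; reflexivity. Qed.

Lemma sproj_powmap (X Y : Type) (f : X -> Y) n (i : Fin.t n) (xs : pow SetFinLim X n) :
  proj SetFinLim Y i (powmap SetFinLim f n xs) = f (proj SetFinLim X i xs).
Proof. exact (equal_f (proj_powmap SetCat_isCat SetFinLim (X:=X) (Y:=Y) f i) xs). Qed.

Lemma sproj_tuple (X Y : Type) n (i : Fin.t n) (fs : Fin.t n -> Y -> X) (y : Y) :
  proj SetFinLim X i (tuple SetFinLim (X:=X) (Y:=Y) fs y) = fs i y.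
Proof. exact (equal_f (proj_tuple SetCat_isCat SetFinLim (X:=X) (Y:=Y) i fs) y). Qed.

Definition stuple (X : Type) n (fs : Fin.t n -> X) : pow SetFinLim X n :=
  tuple SetFinLim (X:=X) (Y:=unit) (fun i _ => fs i) tt.

Lemma sproj_stuple (X : Type) n (i : Fin.t n) (fs : Fin.t n -> X) :
  proj SetFinLim X i (stuple fs) = fs i.
Proof. unfold stuple. apply sproj_tuple. Qed.

Lemma into_sub (T : Theory) (A B : IAlg SetFinLim T) (h : Hom (car A) (car B)) :
  (forall x y : car B, x = y) -> is_alg_hom (A:=A) (B:=B) h.
Proof. intros Hs o. apply functional_extensionality. intros; apply Hs. Qed.

Section Term.
Variables (E : Cat) (HE : IsCat E) (L : FinLim E) (T : Theory).

Lemma term_alg : exists (u : forall o : Op T, Hom (pow L (term L) (arity o)) (term L))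
  (H : satisfies (mkA (term L) u)),
  forall B : IAlg L T, is_alg_hom (A:=B) (B:=mkA (term L) u) (bang L _).
Proof.
  destruct (@lift_alg E HE L T (term L) Empty_set (fun e => match e with end)
     (fun e => match e with end) (fun e => match e with end)) with
    (u := fun o : Op T => bang L (pow L (term L) (arity o))) as [Hs [_ Hl]].
  - intros Q a b _. rewrite (bang_uniq L a), (bang_uniq L b). reflexivity.
  - intros o [].
  - exists (fun o : Op T => bang L (pow L (term L) (arity o))), Hs.
    intros B. apply Hl. intros [].
Qed.

Lemma TZ_E (Z : TAlg HE L T) : is_zero_obj Z ->
  (forall Q (x y : Hom Q (car (proj1_sig Z))), x = y) /\
  (forall Q, exists x : Hom Q (car (proj1_sig Z)), True).
Proof.
  intros HZ.
  destruct term_alg as [u [H Hb]].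
  set (Tm := exist _ (mkA (term L) u) H : TAlg HE L T).
  destruct (HZ Tm) as [[a _] [b _]].
  assert (Hba : b ∘ a = idm Z).
  { destruct (HZ Z) as [[c Hc] _]. rewrite (Hc (b ∘ a)), (Hc (idm Z)). reflexivity. }
  apply (f_equal (@proj1_sig _ _)) in Hba. simpl in Hba.
  split.
  - intros Q x y.
    assert (Hx : forall z : Hom Q (car (proj1_sig Z)), z = proj1_sig b ∘ bang L Q).
    { intros z. transitivity ((proj1_sig b ∘ proj1_sig a) ∘ z).
      - transitivity (idm (car (proj1_sig Z)) ∘ z); [symmetry; apply (idlE HE)|].
        f_equal. symmetry. exact Hba.
      - rewrite <- (assocE HE). f_equal. apply (bang_uniq L). }
    rewrite (Hx x), (Hx y). reflexivity.
  - intros Q. exists (proj1_sig b ∘ bang L Q). exact I.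
Qed.
End Term.

Section VZ.
Variable (T : Theory) (HP : Pointed (V T)).

Lemma vzero_sub (Z : V T) : is_zero_obj Z ->
  (forall x y : car (proj1_sig Z), x = y) /\ exists z : car (proj1_sig Z), True.
Proof.
  intros HZ. destruct (TZ_E (HE:=SetCat_isCat) HZ) as [H1 H2].
  split.
  - intros x y. exact (equal_f (H1 unit (fun _ => x) (fun _ => y)) tt).
  - destruct (H2 unit) as [f _]. exists (f tt). exact I.
Qed.

Lemma vzero_of (W : V T) : (forall x y : car (proj1_sig W), x = y) ->
  forall w0 : car (proj1_sig W), is_zero_obj W.
Proof.
  intros Hs w0 X. destruct HP as [Z0 HZ].
  destruct (vzero_sub HZ) as [Zs [z0 _]].
  split.
  - set (c := exist _ (fun _ => z0) (into_sub (A:=proj1_sig W) (B:=proj1_sig Z0) (fun _ => z0) Zs)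
            : Hom W Z0).
    set (d := exist _ (fun _ => w0) (into_sub (A:=proj1_sig Z0) (B:=proj1_sig W) (fun _ => w0) Hs)
            : Hom Z0 W).
    destruct (HZ X) as [[m0 Hm0] _].
    exists (m0 ∘ c). intros g.
    assert (Hdc : d ∘ c = idm W) by (apply vhom_eq; intros; apply Hs).
    transitivity (g ∘ (d ∘ c)).
    + rewrite Hdc. symmetry. apply (VisCat T).
    + rewrite (proj1 (VisCat T)). f_equal. apply Hm0.
  - exists (exist _ (fun _ => w0) (into_sub (A:=proj1_sig X) (B:=proj1_sig W) (fun _ => w0) Hs)
            : Hom X W).
    intros g. apply vhom_eq. intros; apply Hs.
Qed.
End VZ.
Section F.
Variables (E : Cat) (HE : IsCat E) (L : FinLim E) (T : Theory).
Local Notation TA := (TAlg HE L T).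

Definition FA (Q : E) (A : IAlg L T) : IAlg SetFinLim T :=
  @Build_IAlg SetCat SetFinLim T (Hom Q (car A))
    (fun o xs => act A o ∘ tuple L (fun i => proj SetFinLim (Hom Q (car A)) i xs)).

Lemma FA_interp (Q : E) (A : IAlg L T) n (t : Term T n) xs :
  interp (FA Q A) t xs = interp A t ∘ tuple L (fun i => proj SetFinLim _ i xs).
Proof.
  induction t as [i|o ts IH]; simpl.
  - symmetry. apply (proj_tuple HE).
  - rewrite <- (assocE HE), (tuple_comp HE). f_equal. apply tuple_ext. intros i.
    rewrite sproj_tuple. apply IH.
Qed.

Lemma FA_sat (Q : E) (A : IAlg L T) : satisfies A -> satisfies (FA Q A).
Proof.
  intros H n t1 t2 Ht. apply functional_extensionality. intros xs.
  rewrite !FA_interp, (H _ _ _ Ht). reflexivity.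
Qed.

Definition FO (Q : E) (A : TA) : V T := exist _ (FA Q (proj1_sig A)) (FA_sat Q (proj2_sig A)).

Lemma FH_hom (Q : E) (A B : IAlg L T) (f : Hom (car A) (car B)) :
  is_alg_hom f -> is_alg_hom (A:=FA Q A) (B:=FA Q B) (fun x : Hom Q (car A) => f ∘ x).
Proof.
  intros Hf o. apply functional_extensionality. intros xs. simpl.
  rewrite (assocE HE), Hf, <- (assocE HE), (powmap_tuple HE). f_equal.
  apply tuple_ext. intros i. rewrite sproj_powmap. reflexivity.
Qed.

Definition FH (Q : E) (A B : TA) (f : Hom A B) : Hom (FO Q A) (FO Q B) :=
  exist _ (fun x => proj1_sig f ∘ x) (FH_hom Q (proj2_sig f)).

Lemma Pre_hom (Q Q' : E) (g : Hom Q' Q) (A : IAlg L T) :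
  is_alg_hom (A:=FA Q A) (B:=FA Q' A) (fun x : Hom Q (car A) => x ∘ g).
Proof.
  intros o. apply functional_extensionality. intros xs. simpl.
  rewrite <- (assocE HE), (tuple_comp HE). f_equal.
  apply tuple_ext. intros i. rewrite sproj_powmap. reflexivity.
Qed.

Definition Pre (Q Q' : E) (g : Hom Q' Q) (A : TA) : Hom (FO Q A) (FO Q' A) :=
  exist _ (fun x => x ∘ g) (Pre_hom g (proj1_sig A)).

Lemma FH_comp Q (A B D : TA) (f : Hom A B) (g : Hom B D) : FH Q (g ∘ f) = FH Q g ∘ FH Q f.
Proof. apply vhom_eq. intros x. simpl. symmetry. apply (assocE HE). Qed.

Lemma FH_id Q (A : TA) : FH Q (idm A) = idm (FO Q A).
Proof. apply vhom_eq. intros x. simpl. apply (idlE HE). Qed.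

Lemma Pre_FH Q Q' (g : Hom Q' Q) (A B : TA) (f : Hom A B) :
  Pre g B ∘ FH Q f = FH Q' f ∘ Pre g A.
Proof. apply vhom_eq. intros x. simpl. symmetry. apply (assocE HE). Qed.

Lemma FPB Q (A B D P : TA) (f : Hom A D) (g : Hom B D) (p1 : Hom P A) (p2 : Hom P B) :
  is_pullback (proj1_sig f) (proj1_sig g) (proj1_sig p1) (proj1_sig p2) ->
  is_pullback (C:=V T) (FH Q f) (FH Q g) (FH Q p1) (FH Q p2).
Proof.
  intros H. split.
  - apply vhom_eq. intros x. simpl. rewrite !(assocE HE), (proj1 H). reflexivity.
  - intros W h k Hhk.
    assert (Hx : forall w, proj1_sig f ∘ proj1_sig h w = proj1_sig g ∘ proj1_sig k w)
      by (intros w; exact (vapp Hhk w)).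
    assert (Ex : forall w, exists x, proj1_sig p1 ∘ x = proj1_sig h w /\ proj1_sig p2 ∘ x = proj1_sig k w).
    { intros w. destruct (proj2 H Q _ _ (Hx w)) as [x [X1 [X2 _]]]. exists x; split; assumption. }
    set (U := fun w => proj1_sig (constructive_indefinite_description _ (Ex w))).
    assert (HU : forall w, proj1_sig p1 ∘ U w = proj1_sig h w /\ proj1_sig p2 ∘ U w = proj1_sig k w).
    { intros w. unfold U. destruct (constructive_indefinite_description _ _) as [x Hx']. exact Hx'. }
    assert (Uh : is_alg_hom (A:=proj1_sig W) (B:=FA Q (proj1_sig P)) U).
    { intros o. apply functional_extensionality. intros ws. simpl.
      apply (pb_jmono HE H).
      - rewrite (proj1 (HU _)).
        pose proof (equal_f (proj2_sig h o) ws) as Eh. simpl in Eh. etransitivity; [exact Eh|]. simpl.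
        rewrite (assocE HE), (proj2_sig p1 o), <- (assocE HE), (powmap_tuple HE).
        f_equal. apply tuple_ext. intros i. rewrite !sproj_powmap. symmetry. apply HU.
      - rewrite (proj2 (HU _)).
        pose proof (equal_f (proj2_sig k o) ws) as Eh. simpl in Eh. etransitivity; [exact Eh|]. simpl.
        rewrite (assocE HE), (proj2_sig p2 o), <- (assocE HE), (powmap_tuple HE).
        f_equal. apply tuple_ext. intros i. rewrite !sproj_powmap. symmetry. apply HU. }
    exists (exist _ U Uh). split; [|split].
    + apply vhom_eq. intros w. apply HU.
    + apply vhom_eq. intros w. apply HU.
    + intros u' U1 U2. apply vhom_eq. intros w. simpl.
      apply (pb_jmono HE H).
      * rewrite (proj1 (HU w)). exact (vapp U1 w).
      * rewrite (proj2 (HU w)). exact (vapp U2 w).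
Qed.

End F.
Section F2.
Variables (E : Cat) (HE : IsCat E) (L : FinLim E) (T : Theory).
Local Notation TA := (TAlg HE L T).

Lemma FZ (HP : Pointed (V T)) Q (Z : TA) : is_zero_obj Z -> is_zero_obj (FO Q Z).
Proof.
  intros HZ. destruct (TZ_E HZ) as [H1 H2]. destruct (H2 Q) as [x _].
  apply (vzero_of HP (W:=FO Q Z)); [intros; apply H1|exact x].
Qed.

Lemma Fzm (HP : Pointed (V T)) Q (A B : TA) (f : Hom A B) :
  is_zero_mor f -> is_zero_mor (FH Q f).
Proof.
  intros [Z [a [b [HZ ->]]]]. exists (FO Q Z), (FH Q a), (FH Q b).
  split; [apply FZ; assumption|apply FH_comp].
Qed.

Lemma Fprod Q (A B P : TA) (p1 : Hom P A) (p2 : Hom P B) :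
  is_product p1 p2 -> is_product (FH Q p1) (FH Q p2).
Proof.
  intros Hp.
  destruct (term_alg HE L T) as [u [H Hb]].
  set (Tm := exist _ (mkA (term L) u) H : TA).
  assert (HT : forall (X : TA) (f g : Hom X Tm), f = g).
  { intros X f g. apply sig_eq. rewrite (bang_uniq L (proj1_sig f)), (bang_uniq L (proj1_sig g)).
    reflexivity. }
  set (a := exist _ (bang L _) (Hb _) : Hom A Tm).
  set (b := exist _ (bang L _) (Hb _) : Hom B Tm).
  apply (prod_pb HT a b) in Hp.
  apply TPB_E in Hp. apply (FPB Q) in Hp.
  apply (prod_pb (T0 := FO Q Tm)) with (a := FH Q a) (b := FH Q b); [|exact Hp].
  intros X f g. apply vhom_eq. intros x.
  rewrite (bang_uniq L (proj1_sig f x)), (bang_uniq L (proj1_sig g x)). reflexivity.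
Qed.

Lemma eqrel_Ejm (X R : TA) (d0 d1 : Hom R X) : is_eqrel d0 d1 ->
  forall Q (a b : Hom Q (car (proj1_sig R))),
    proj1_sig d0 ∘ a = proj1_sig d0 ∘ b -> proj1_sig d1 ∘ a = proj1_sig d1 ∘ b -> a = b.
Proof.
  intros [Hjm _] Q a b Ha Hb.
  set (m := pair L (proj1_sig d0) (proj1_sig d1)).
  destruct (has_pb L m m) as [K [k1 [k2 Hk]]].
  assert (Hd0 : proj1_sig d0 ∘ k1 = proj1_sig d0 ∘ k2).
  { pose proof (f_equal (fun z => pr1 L _ _ ∘ z) (proj1 Hk)) as e. simpl in e.
    rewrite !(assocE HE) in e. unfold m in e. rewrite (pr1_pair L) in e. exact e. }
  assert (Hd1 : proj1_sig d1 ∘ k1 = proj1_sig d1 ∘ k2).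
  { pose proof (f_equal (fun z => pr2 L _ _ ∘ z) (proj1 Hk)) as e. simpl in e.
    rewrite !(assocE HE) in e. unfold m in e. rewrite (pr2_pair L) in e. exact e. }
  assert (Ex : forall o, exists w : Hom (pow L K (arity o)) K,
     k1 ∘ w = act (proj1_sig R) o ∘ powmap L k1 _ /\ k2 ∘ w = act (proj1_sig R) o ∘ powmap L k2 _).
  { intros o. destruct (proj2 Hk _ (act (proj1_sig R) o ∘ powmap L k1 _)
                                   (act (proj1_sig R) o ∘ powmap L k2 _)) as [w [W1 [W2 _]]].
    - unfold m. rewrite !(pair_comp HE). f_equal.
      + rewrite !(assocE HE), !(proj2_sig d0 o), <- !(assocE HE), <- !(powmap_comp HE), Hd0.
        reflexivity.
      + rewrite !(assocE HE), !(proj2_sig d1 o), <- !(assocE HE), <- !(powmap_comp HE), Hd1.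
        reflexivity.
    - exists w; split; assumption. }
  set (u := fun o => proj1_sig (constructive_indefinite_description _ (Ex o))).
  assert (Hu : forall o, k1 ∘ u o = act (proj1_sig R) o ∘ powmap L k1 _ /\
                         k2 ∘ u o = act (proj1_sig R) o ∘ powmap L k2 _).
  { intros o. unfold u. destruct (constructive_indefinite_description _ _) as [w Hw]. exact Hw. }
  destruct (@lift_alg E HE L T K bool (fun _ => proj1_sig R) (fun _ => proj2_sig R)
              (fun j => if j then k1 else k2)) with (u := u) as [Hs [Hp _]].
  { intros Q' x y Hxy. apply (pb_jmono HE Hk); [apply (Hxy true)|apply (Hxy false)]. }
  { intros o [|]; apply Hu. }
  set (Kt := exist _ (mkA K u) Hs : TA).
  assert (Hkk : (exist _ k1 (Hp true) : Hom Kt R) = exist _ k2 (Hp false)).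
  { apply Hjm; apply sig_eq; simpl; assumption. }
  apply (f_equal (@proj1_sig _ _)) in Hkk. simpl in Hkk.
  destruct (proj2 Hk Q a b) as [w [W1 [W2 _]]].
  { unfold m. rewrite !(pair_comp HE), Ha, Hb. reflexivity. }
  rewrite <- W1, <- W2, Hkk. reflexivity.
Qed.

Lemma F_eqrel Q (X R : TA) (d0 d1 : Hom R X) : is_eqrel d0 d1 -> is_eqrel (FH Q d0) (FH Q d1).
Proof.
  intros H. pose proof H as [_ [[r [R0 R1]] [[s [S0 S1]] Htr]]].
  split; [|split; [|split]].
  - intros W a b Ha Hb. apply vhom_eq. intros x.
    apply (eqrel_Ejm H); [exact (vapp Ha x)|exact (vapp Hb x)].
  - exists (FH Q r). rewrite <- !FH_comp, R0, R1, FH_id. split; reflexivity.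
  - exists (FH Q s). rewrite <- !FH_comp, S0, S1. split; reflexivity.
  - intros Pv p1 p2 Hpv.
    destruct (has_pb L (proj1_sig d1) (proj1_sig d0)) as [K [k1 [k2 Hk]]].
    destruct (lift_pb (HE:=HE) Hk) as [u [HK [H1 [H2 HpbK]]]].
    destruct (Htr _ _ _ HpbK) as [t [T0 T1]].
    pose proof (FPB Q (f:=d1) (g:=d0) (p1:=exist _ k1 H1 : Hom (exist _ (mkA K u) HK : TA) R)
                  (p2:=exist _ k2 H2 : Hom (exist _ (mkA K u) HK : TA) R) Hk) as FK.
    destruct (proj2 FK Pv p1 p2 (proj1 Hpv)) as [w [W1 [W2 _]]].
    exists (FH Q t ∘ w). split.
    + rewrite (proj1 (VisCat T)), <- FH_comp, T0, FH_comp, <- (proj1 (VisCat T)), W1. reflexivity.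
    + rewrite (proj1 (VisCat T)), <- FH_comp, T1, FH_comp, <- (proj1 (VisCat T)), W2. reflexivity.
Qed.

End F2.
Lemma spow_ext (X : Type) n (xs ys : pow SetFinLim X n) :
  (forall i, proj SetFinLim X i xs = proj SetFinLim X i ys) -> xs = ys.
Proof.
  intros H.
  assert (E : (fun _ : unit => xs) = (fun _ : unit => ys)).
  { apply (proj_ext SetCat_isCat (L:=SetFinLim) (X:=X) (Y:=unit)). intros i.
    apply functional_extensionality. intros u0. apply H. }
  exact (equal_f E tt).
Qed.

Section JE.
Variables (T : Theory) (HP : Pointed (V T)) (HPM : Protomodular (V T)).

Lemma JE (Xv Rv Sv Pv : V T) (d1R : Hom Rv Xv) (d0S : Hom Sv Xv) (q1 : Hom Pv Rv)
  (q2 : Hom Pv Sv) (lR : Hom Rv Pv) (rS : Hom Sv Pv) (eS : Hom Xv Sv) :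
  d0S ∘ eS = idm Xv -> d1R ∘ q1 = d0S ∘ q2 -> q1 ∘ lR = idm Rv -> q2 ∘ lR = eS ∘ d1R ->
  q2 ∘ rS = idm Sv ->
  (forall w w', proj1_sig q1 w = proj1_sig q1 w' -> proj1_sig q2 w = proj1_sig q2 w' -> w = w') ->
  forall (Y : V T) (al be : Hom Pv Y), al ∘ lR = be ∘ lR -> al ∘ rS = be ∘ rS -> al = be.
Proof.
  intros HeS Hc Hql Hq2l Hq2r Hjm Y al be Hl Hr.
  destruct HP as [Z0 HZ].
  destruct (HZ Sv) as [[z Hz] _].
  destruct (has_pb SetFinLim (proj1_sig q2) (proj1_sig z)) as [K [k [t Hk]]].
  destruct (lift_pb (HE:=SetCat_isCat) Hk) as [u [HK [H1 [H2 HpbK]]]].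
  set (Kt := exist _ (mkA K u) HK : V T).
  set (kt := exist _ k H1 : Hom Kt Pv).
  assert (Hker : is_kernel q2 kt).
  { exists Z0, z, (exist _ t H2). split; [exact HZ|exact HpbK]. }
  set (Mc := {w : car (proj1_sig Pv) | proj1_sig al w = proj1_sig be w}).
  assert (Hcl : forall o (ms : pow SetFinLim Mc (arity o)),
    proj1_sig al (act (proj1_sig Pv) o (powmap SetFinLim (fun m : Mc => proj1_sig m) _ ms)) =
    proj1_sig be (act (proj1_sig Pv) o (powmap SetFinLim (fun m : Mc => proj1_sig m) _ ms))).
  { intros o ms.
    pose proof (equal_f (proj2_sig al o) (powmap SetFinLim (fun m : Mc => proj1_sig m) _ ms)) as e1.
    pose proof (equal_f (proj2_sig be o) (powmap SetFinLim (fun m : Mc => proj1_sig m) _ ms)) as e2.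
    simpl in e1, e2. etransitivity; [exact e1|]. etransitivity; [|symmetry; exact e2]. simpl. f_equal. apply spow_ext. intros i.
    rewrite !sproj_powmap. apply (proj2_sig (proj SetFinLim Mc i ms)). }
  set (uM := fun o ms => exist _ _ (Hcl o ms) : Mc).
  destruct (@lift_alg SetCat SetCat_isCat SetFinLim T Mc unit (fun _ => proj1_sig Pv)
              (fun _ => proj2_sig Pv) (fun _ (m : Mc) => proj1_sig m)) with (u := uM)
    as [HsM [HpM HlM]].
  { intros Q' a b H. apply functional_extensionality. intros x. apply sig_eq.
    exact (equal_f (H tt) x). }
  { intros o j. reflexivity. }
  set (Mt := exist _ (@mkA SetCat SetFinLim T Mc uM) HsM : V T).
  set (m := exist _ (fun x : Mc => proj1_sig x) (HpM tt) : Hom Mt Pv).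
  assert (Hmono : is_mono m).
  { intros Q' a b Hab. apply vhom_eq. intros x. apply sig_eq. exact (vapp Hab x). }
  assert (Hka : forall x, proj1_sig al (k x) = proj1_sig be (k x)).
  { intros x.
    assert (Ek : k x = proj1_sig lR (proj1_sig q1 (k x))).
    { apply Hjm.
      - symmetry. exact (vapp Hql (proj1_sig q1 (k x))).
      - pose proof (vapp Hq2l (proj1_sig q1 (k x))) as e. simpl in e.
        pose proof (vapp Hc (k x)) as e'. simpl in e'.
        pose proof (equal_f (proj1 Hk) x) as e''. simpl in e''.
        assert (Hzz : eS ∘ d0S ∘ z = z) by exact (Hz _).
        pose proof (vapp Hzz (t x)) as ez. simpl in ez.
        etransitivity; [exact e''|]. etransitivity; [symmetry; exact ez|].
        etransitivity; [|symmetry; exact e]. f_equal.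
        etransitivity; [|symmetry; exact e']. f_equal. symmetry. exact e''. }
    rewrite Ek. exact (vapp Hl _). }
  set (aa := fun x : K => exist _ (k x) (Hka x) : Mc).
  assert (Haa : is_alg_hom (A:=mkA K u) (B:=@mkA SetCat SetFinLim T Mc uM) aa).
  { apply HlM. intros j. exact H1. }
  set (bb := fun s : car (proj1_sig Sv) => exist _ (proj1_sig rS s) (vapp Hr s) : Mc).
  assert (Hbb : is_alg_hom (A:=proj1_sig Sv) (B:=@mkA SetCat SetFinLim T Mc uM) bb).
  { apply HlM. intros j. exact (proj2_sig rS). }
  assert (Ha' : exists a, m ∘ a = kt).
  { exists (exist _ aa Haa : Hom Kt Mt). apply vhom_eq. intros x. reflexivity. }
  assert (Hb' : exists b, m ∘ b = rS).
  { exists (exist _ bb Hbb : Hom Sv Mt). apply vhom_eq. intros x. reflexivity. }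
  assert (Hiso : is_iso m) by (eapply HPM; eassumption).
  destruct Hiso as [n [_ Hmn]].
  apply vhom_eq. intros w.
  pose proof (vapp Hmn w) as e. simpl in e. rewrite <- e.
  exact (proj2_sig (proj1_sig n w)).
Qed.
End JE.
Theorem theorem3p8 (T : Theory) :
  Pointed (Variety T) -> Protomodular (Variety T) ->
  HuqSmith (Variety T) ->
  forall (E : Cat) (HE : IsCat E) (L : FinLim E), HuqSmith (TAlg HE L T).
Proof.
  intros HP HPM HSv E HE L.
  unfold HuqSmith.
  intros X R S d0R d1R d0S d1S HR HS Z zX HZ IR xR tR HIR IS xS tS HIS Hco.
  pose proof HR as [_ [[eR [eR0 eR1]] _]].
  pose proof HS as [_ [[eS [eS0 eS1]] _]].
  destruct (has_pb L (proj1_sig d1R) (proj1_sig d0S)) as [P [q1 [q2 Hq]]].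
  destruct (lift_pb (HE:=HE) Hq) as [u [HPs [H1 [H2 HpbP]]]].
  set (Pt := exist _ (mkA P u) HPs : TAlg HE L T).
  set (q1t := exist _ q1 H1 : Hom Pt R).
  set (q2t := exist _ q2 H2 : Hom Pt S).
  assert (assocT := proj1 (TA_isCat HE L T)).
  assert (idlT := proj1 (proj2 (TA_isCat HE L T))).
  assert (idrT := proj2 (proj2 (TA_isCat HE L T))).
  destruct (proj2 HpbP R (idm R) (eS ∘ d1R)) as [lR [L1 [L2 _]]].
  { rewrite assocT. rewrite eS0, idlT, idrT. reflexivity. }
  destruct (proj2 HpbP S (eR ∘ d0S) (idm S)) as [rS [R1 [R2 _]]].
  { rewrite assocT, eR1, idlT, idrT. reflexivity. }
  fold q1t q2t in L1, L2, R1, R2.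
  (* the connector at each stage Q *)
  assert (Claim : forall Q : E, exists c : Hom (FO Q Pt) (FO Q X),
             c ∘ FH Q lR = FH Q d0R /\ c ∘ FH Q rS = FH Q d1S).
  { intros Q.
    assert (FR := F_eqrel Q HR). assert (FS := F_eqrel Q HS).
    assert (FZ0 := FZ HP Q HZ).
    assert (FIR := FPB Q (TPB_E HIR)). assert (FIS := FPB Q (TPB_E HIS)).
    assert (Fco : cooperate (FH Q d1R ∘ FH Q xR) (FH Q d1S ∘ FH Q xS)).
    { destruct Hco as [Pc [p1 [p2 [m1 [m2 [phi [Hprod [E1 [Z1 [Z2 [E2 [E3 E4]]]]]]]]]]]].
      exists (FO Q Pc), (FH Q p1), (FH Q p2), (FH Q m1), (FH Q m2), (FH Q phi).
      split; [apply Fprod; exact Hprod|].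
      rewrite <- !FH_comp, E1, E2, E3, E4, !FH_id.
      split; [reflexivity|]. split; [apply Fzm; assumption|].
      split; [apply Fzm; assumption|]. repeat split. }
    assert (Hcent : centralize (FH Q d0R) (FH Q d1R) (FH Q d0S) (FH Q d1S))
      by (eapply HSv; eassumption).
    destruct Hcent as [P' [q1' [q2' [eR' [eS' [lR' [rS' [p' [Hpb'
       [C1 [C2 [C3 [C4 [C5 [C6 [C7 [C8 [C9 C10]]]]]]]]]]]]]]]]]].
    destruct (proj2 Hpb' (FO Q Pt) (FH Q q1t) (FH Q q2t)) as [w [W1 [W2 _]]].
    { rewrite <- !FH_comp. f_equal. exact (proj1 HpbP). }
    assert (HeS' : eS' = FH Q eS).
    { apply (proj1 FS); rewrite <- ?FH_comp, ?C3, ?C4, ?eS0, ?eS1, ?FH_id; reflexivity. }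
    assert (HeR' : eR' = FH Q eR).
    { apply (proj1 FR); rewrite <- ?FH_comp, ?C1, ?C2, ?eR0, ?eR1, ?FH_id; reflexivity. }
    subst eS' eR'.
    assert (assocV := proj1 (VisCat T)).
    assert (idlV := proj1 (proj2 (VisCat T))).
    assert (idrV := proj2 (proj2 (VisCat T))).
    assert (WL : w ∘ FH Q lR = lR').
    { apply (pb_jmono (VisCat T) Hpb').
      - rewrite assocV, W1, <- FH_comp. rewrite L1, FH_id, C5. reflexivity.
      - rewrite assocV, W2, <- FH_comp, L2, FH_comp, C6. reflexivity. }
    assert (WR : w ∘ FH Q rS = rS').
    { apply (pb_jmono (VisCat T) Hpb').
      - rewrite assocV, W1, <- FH_comp, R1, FH_comp, C7. reflexivity.
      - rewrite assocV, W2, <- FH_comp, R2, FH_id, C8. reflexivity. }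
    exists (p' ∘ w). split.
    - rewrite <- assocV, WL. exact C10.
    - rewrite <- assocV, WR. exact C9. }
  assert (Nat : forall (Q Q' : E) (g : Hom Q' Q) (c : Hom (FO Q Pt) (FO Q X))
                  (c' : Hom (FO Q' Pt) (FO Q' X)),
             c ∘ FH Q lR = FH Q d0R -> c ∘ FH Q rS = FH Q d1S ->
             c' ∘ FH Q' lR = FH Q' d0R -> c' ∘ FH Q' rS = FH Q' d1S ->
             forall x, proj1_sig c' (x ∘ g) = proj1_sig c x ∘ g).
  { intros Q Q' g c c' Hc1 Hc2 Hc1' Hc2' x.
    assert (Heq : c' ∘ Pre g Pt = Pre g X ∘ c).
    { eapply (JE HP HPM (d1R := FH Q d1R) (d0S := FH Q d0S) (q1 := FH Q q1t) (q2 := FH Q q2t)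
                (eS := FH Q eS) (lR := FH Q lR) (rS := FH Q rS)).
      - rewrite <- FH_comp, eS0, FH_id. reflexivity.
      - rewrite <- !FH_comp. f_equal. exact (proj1 HpbP).
      - rewrite <- FH_comp, L1, FH_id. reflexivity.
      - rewrite <- !FH_comp, L2. reflexivity.
      - rewrite <- FH_comp, R2, FH_id. reflexivity.
      - intros y y' Y1 Y2. exact (pb_jmono HE Hq Y1 Y2).
      - apply vhom_eq. intros r. simpl.
        pose proof (vapp Hc1' (r ∘ g)) as e1. simpl in e1.
        pose proof (vapp Hc1 r) as e2. simpl in e2.
        rewrite <- (assocE HE), e1, e2. apply (assocE HE).
      - apply vhom_eq. intros r. simpl.
        pose proof (vapp Hc2' (r ∘ g)) as e1. simpl in e1.
        pose proof (vapp Hc2 r) as e2. simpl in e2.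
        rewrite <- (assocE HE), e1, e2. apply (assocE HE). }
    exact (vapp Heq x). }
  destruct (Claim P) as [c0 [Hc01 Hc02]].
  set (p := proj1_sig c0 (idm P) : Hom P (car (proj1_sig X))).
  assert (Hp : is_alg_hom (A:=mkA P u) (B:=proj1_sig X) p).
  { intros o.
    destruct (Claim (pow L P (arity o))) as [cn [Hcn1 Hcn2]].
    assert (N1 : forall y : Hom (pow L P (arity o)) P, proj1_sig cn y = p ∘ y).
    { intros y. pose proof (Nat _ _ y c0 cn Hc01 Hc02 Hcn1 Hcn2 (idm P)) as e.
      rewrite (idlE HE) in e. exact e. }
    set (xs := stuple (fun i : Fin.t (arity o) => proj L P i)).
    assert (Hx : u o = act (FA (pow L P (arity o)) (mkA P u)) o xs).
    { simpl. transitivity (u o ∘ idm _); [symmetry; apply (idrE HE)|].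
      f_equal. rewrite <- (tuple_proj HE). apply tuple_ext. intros i.
      unfold xs. rewrite sproj_stuple. reflexivity. }
    simpl. transitivity (proj1_sig cn (u o)); [symmetry; apply N1|].
    rewrite Hx. pose proof (equal_f (proj2_sig cn o) xs) as e. simpl in e.
    etransitivity; [exact e|]. unfold powmap. f_equal. apply tuple_ext. intros i.
    rewrite sproj_tuple. simpl. unfold xs. rewrite sproj_stuple. apply N1. }
  set (pt := exist _ p Hp : Hom Pt X).
  exists Pt, q1t, q2t, eR, eS, lR, rS, pt.
  split; [exact HpbP|].
  do 8 (split; [assumption|]).
  split.
  - apply sig_eq. simpl.
    destruct (Claim (car (proj1_sig S))) as [cS [HcS1 HcS2]].
    pose proof (Nat _ _ (proj1_sig rS) c0 cS Hc01 Hc02 HcS1 HcS2 (idm P)) as e.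
    etransitivity; [symmetry; exact e|].
    pose proof (vapp HcS2 (idm _)) as e2. simpl in e2.
    rewrite !(idrE HE) in e2. rewrite (idlE HE). exact e2.
  - apply sig_eq. simpl.
    destruct (Claim (car (proj1_sig R))) as [cR [HcR1 HcR2]].
    pose proof (Nat _ _ (proj1_sig lR) c0 cR Hc01 Hc02 HcR1 HcR2 (idm P)) as e.
    etransitivity; [symmetry; exact e|].
    pose proof (vapp HcR1 (idm _)) as e2. simpl in e2.
    rewrite !(idrE HE) in e2. rewrite (idlE HE). exact e2.
Qed.
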